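(* Let $\alpha,\beta,b,d>0$, $d_2>0$, $\tau>0$, and let $\Gamma(x,y,a)$ be the Green's function described in the context. The principal eigenvalue $s_1$ of the nonlocal eigenvalue problem $s\psi=d_2\psi''-\alpha\psi+e^{-s\tau}\frac{b\beta}{d}\int_0^\pi\Gamma(x,y,\tau)\psi(y)\,dy$, $x\in(0,\pi)$, $\psi'(0)=\psi'(\pi)=0$, has the same sign as $\lambda_1=-\alpha+\frac{\beta b}{d e^{\alpha\tau}}$.
   Context: $\Gamma(x,y,a)$, $x,y\in[0,\pi]$, $a>0$, is the Green's function of $\partial_aW=d_2\partial_{xx}W-\alpha W$ on $(0,\pi)$ with Neumann conditions $\partial_xW(a,0)=\partial_xW(a,\pi)=0$, i.e. the solution with initial value $W_0$ is $\int_0^\pi\Gamma(x,y,a)W_0(y)\,dy$. The principal eigenvalue of the nonlocal problem is the eigenvalue associated with a strictly positive eigenfunction (its existence is known). *)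

(* Defs.v *)
From Stdlib Require Import Reals.
From Coquelicot Require Import Coquelicot.
Open Scope R_scope.

(* Neumann Green's function of  W_a = d2 W_xx - alpha W  on (0,pi):
   Gamma(x,y,a) = 1/pi * e^{-alpha a}
                  + 2/pi * sum_{n>=1} e^{-(d2 n^2 + alpha) a} cos(n x) cos(n y). *)
Definition green_coef (n : nat) : R := if Nat.eqb n 0 then 1 else 2.

Definition Gamma (d2 alpha : R) (x y a : R) : R :=
  Series (fun n : nat =>
    green_coef n / PI * exp (- (d2 * (INR n) ^ 2 + alpha) * a)
      * cos (INR n * x) * cos (INR n * y)).

Definition principal_eigenpair (alpha beta b d d2 tau : R)
    (s : R) (psi : R -> R) : Prop :=
  (forall x, 0 <= x <= PI -> ex_derive psi x /\ ex_derive (Derive psi) x) /\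
  (forall x, 0 <= x <= PI -> continuous (Derive_n psi 2) x) /\
  (forall x, 0 <= x <= PI -> 0 < psi x) /\
  Derive psi 0 = 0 /\ Derive psi PI = 0 /\
  (forall x, 0 < x < PI ->
     s * psi x = d2 * Derive_n psi 2 x - alpha * psi x
       + exp (- s * tau) * (b * beta / d)
         * RInt (fun y => Gamma d2 alpha x y tau * psi y) 0 PI).

(* Main.v *)
Require Import Defs.
From Stdlib Require Import Reals Lra Lia.
From Coquelicot Require Import Coquelicot.
Open Scope R_scope.

Lemma unif_RInt (f : nat -> R -> R) g a b (C q : R) :
  a <= b -> 0 <= C -> 0 <= q < 1 -> (forall n, ex_RInt (f n) a b) ->
  (forall n y, Rabs (f n y - g y) <= C * q ^ n) ->
  ex_RInt g a b /\ forall n, Rabs (RInt (f n) a b - RInt g a b) <= (b - a) * (C * q ^ n).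
Proof.
  intros Hab HC Hq Hf Hu.
  assert (Hg : ex_RInt g a b).
  { destruct (filterlim_RInt f a b eventually eventually_filter g (fun n => RInt (f n) a b))
      as [If [_ HI]]; [ | | exists If; exact HI].
    - intros n; apply RInt_correct; auto.
    - intros P [eps HP].
      assert (Hq1 : Rabs q < 1) by (rewrite Rabs_right; lra).
      assert (He : 0 < eps / (C + 1)).
      { apply Rdiv_lt_0_compat; [apply cond_pos | lra]. }
      destruct (pow_lt_1_zero q Hq1 _ He) as [N HN].
      exists N. intros n Hn. apply HP. intros t.
      change (Rabs (f n t - g t) < eps).
      specialize (HN n Hn). rewrite Rabs_right in HN by (apply Rle_ge, pow_le; lra).
      specialize (Hu n t).
      assert (0 <= q ^ n) by (apply pow_le; lra).
      apply Rle_lt_trans with ((C+1) * q ^ n); [nra|].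
      apply Rmult_lt_reg_r with (/ (C+1)). apply Rinv_0_lt_compat; lra.
      rewrite Rmult_comm, <- Rmult_assoc, Rinv_l by lra. unfold Rdiv in HN. lra.
    }
  split; auto. intros n.
  rewrite <- (RInt_minus (f n) g) by auto.
  apply abs_RInt_le_const; [exact Hab | apply ex_RInt_minus; auto | intros t _; apply Hu].
Qed.

Lemma series_tail (t : nat -> R) K q : 0 <= K -> 0 <= q < 1 ->
  (forall n, Rabs (t n) <= K * q ^ n) ->
  ex_series t /\ forall N, Rabs (Series t - sum_f_R0 t N) <= K * q ^ (S N) / (1 - q).
Proof.
  intros HK Hq Ht.
  assert (Hq1 : Rabs q < 1) by (rewrite Rabs_right; lra).
  assert (Hex : ex_series t).
  { apply (ex_series_le t (fun n => K * q ^ n)).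
    - intros n; apply Ht.
    - apply (ex_series_scal_l K (fun n => q ^ n)), ex_series_geom; auto. }
  split; auto. intros N.
  rewrite (Series_incr_n t (S N)) by (auto; lia). simpl Init.Nat.pred.
  replace (sum_f_R0 t N + Series (fun k => t (S N + k)%nat) - sum_f_R0 t N)
    with (Series (fun k => t (S N + k)%nat)) by ring.
  assert (Hb : forall k, Rabs (t (S N + k)%nat) <= K * q ^ (S N) * q ^ k).
  { intros k. rewrite Rmult_assoc, <- pow_add. apply Ht. }
  assert (Hgs : ex_series (fun k => K * q ^ (S N) * q ^ k)).
  { apply (ex_series_scal_l (K * q ^ (S N)) (fun n => q ^ n)), ex_series_geom; auto. }
  eapply Rle_trans. apply Series_Rabs.
  { apply (@ex_series_le R_AbsRing R_CompleteNormedModule _ (fun k => K * q ^ (S N) * q ^ k)); auto.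
    intros k. change (Rabs (Rabs (t (S N + k)%nat)) <= K * q ^ S N * q ^ k).
    rewrite Rabs_Rabsolu; auto. }
  eapply Rle_trans. apply (Series_le _ (fun k => K * q ^ (S N) * q ^ k)); auto.
  intros k; split; [apply Rabs_pos | auto].
  rewrite (Series_scal_l _ (fun k => q ^ k)). rewrite (is_series_unique _ _ (is_series_geom q Hq1)).
  unfold Rdiv; lra.
Qed.

Lemma exp_pow_INR x n : exp x ^ n = exp (INR n * x).
Proof.
  induction n. simpl. rewrite Rmult_0_l, exp_0; auto.
  rewrite S_INR, <- tech_pow_Rmult, IHn, <- exp_plus. f_equal; ring.
Qed.

Lemma exp_le_mono x y : x <= y -> exp x <= exp y.
Proof. intros [H|H]; [left; apply exp_increasing; auto | subst; lra]. Qed.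

Definition gterm (d2 alpha x y a : R) (n : nat) : R :=
  green_coef n / PI * exp (- (d2 * (INR n) ^ 2 + alpha) * a)
      * cos (INR n * x) * cos (INR n * y).

Lemma Rabs_cos_le x : Rabs (cos x) <= 1.
Proof. apply Rabs_le; apply COS_bound. Qed.

Lemma gterm_bound d2 alpha tau x y n : 0 < d2 -> 0 < tau ->
  Rabs (gterm d2 alpha x y tau n) <= (2 / PI * exp (- alpha * tau)) * exp (- d2 * tau) ^ n.
Proof.
  intros Hd2 Htau. unfold gterm.
  rewrite !Rabs_mult. rewrite (Rabs_right (exp _)) by (apply Rle_ge, Rlt_le, exp_pos).
  assert (Hg : Rabs (green_coef n / PI) <= 2 / PI).
  { unfold green_coef. assert (PI > 0) by apply PI_RGT_0.
    unfold Rdiv. rewrite Rabs_mult, (Rabs_right (/ PI)) by (apply Rle_ge, Rlt_le, Rinv_0_lt_compat; lra).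
    apply Rmult_le_compat_r. apply Rlt_le, Rinv_0_lt_compat; lra.
    destruct (Nat.eqb n 0); rewrite Rabs_right; lra. }
  assert (He : exp (- (d2 * INR n ^ 2 + alpha) * tau) <= exp (- alpha * tau) * exp (- d2 * tau) ^ n).
  { rewrite exp_pow_INR, <- exp_plus. apply exp_le_mono.
    assert (INR n <= INR n ^ 2).
    { destruct n. simpl; lra. rewrite S_INR. pose proof (pos_INR n). simpl. nra. }
    assert (0 < d2 * tau) by nra.
    assert (0 <= d2 * tau * (INR n ^ 2 - INR n)) by (apply Rmult_le_pos; lra).
    nra. }
  pose proof (Rabs_cos_le (INR n * x)). pose proof (Rabs_cos_le (INR n * y)).
  assert (0 <= 2 / PI) by (unfold Rdiv; apply Rmult_le_pos; [lra| apply Rlt_le, Rinv_0_lt_compat, PI_RGT_0]).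
  pose proof (Rabs_pos (cos (INR n * x))). pose proof (Rabs_pos (cos (INR n * y))).
  pose proof (Rabs_pos (green_coef n / PI)).
  pose proof (exp_pos (- (d2 * INR n ^ 2 + alpha) * tau)).
  assert (0 <= exp (- alpha * tau) * exp (- d2 * tau) ^ n).
  { apply Rmult_le_pos; [apply Rlt_le, exp_pos | apply pow_le, Rlt_le, exp_pos]. }
  set (A := Rabs (green_coef n / PI)) in *. set (E := exp (- (d2 * INR n ^ 2 + alpha) * tau)) in *.
  set (c1 := Rabs (cos (INR n * x))) in *. set (c2 := Rabs (cos (INR n * y))) in *.
  set (F := exp (- alpha * tau) * exp (- d2 * tau) ^ n) in *.
  assert (c1 * c2 <= 1) by nra.
  assert (A * E * c1 * c2 <= A * E) by (assert (0 <= A * E) by nra; nra).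
  assert (A * E <= 2 / PI * F) by (apply Rmult_le_compat; lra).
  unfold F in *. nra.
Qed.

Lemma is_RInt_eq_l (f : R -> R) a b l l' : is_RInt f a b l -> l = l' -> is_RInt f a b l'.
Proof. intros H <-; exact H. Qed.

Lemma RInt_correctR (f : R -> R) a b : ex_RInt f a b -> is_RInt f a b (RInt f a b).
Proof. intros H. exact (@RInt_correct R_CompleteNormedModule f a b H). Qed.

Lemma is_RInt_sum (h : nat -> R -> R) a b N : (forall n, ex_RInt (h n) a b) ->
  is_RInt (fun y => sum_f_R0 (fun n => h n y) N) a b (sum_f_R0 (fun n => RInt (h n) a b) N).
Proof.
  intros Hh. induction N.
  - simpl. apply RInt_correctR; auto.
  - simpl. apply (is_RInt_plus (fun y => sum_f_R0 (fun n => h n y) N) (h (S N))); auto.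
    apply RInt_correctR; auto.
Qed.

Lemma is_RInt_cos_n n : (0 < n)%nat -> is_RInt (fun x => cos (INR n * x)) 0 PI 0.
Proof.
  intros Hn. assert (HnR : 0 < INR n) by (apply lt_0_INR; lia).
  apply is_RInt_eq_l with (minus ((fun x => sin (INR n * x) / INR n) PI) ((fun x => sin (INR n * x) / INR n) 0)).
  - apply (@is_RInt_derive R_CompleteNormedModule (fun x => sin (INR n * x) / INR n)).
    + intros x _. auto_derive; auto. field. lra.
    + intros x _. apply (@ex_derive_continuous R_AbsRing R_NormedModule). auto_derive; auto.
  - simpl. rewrite Rmult_0_r, sin_0.
    rewrite (sin_eq_0_1 (INR n * PI)). unfold minus, plus, opp; simpl. field; lra.
    exists (Z.of_nat n). rewrite <- INR_IZR_INZ. auto.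
Qed.

Lemma is_RInt_cos_sum (u : nat -> R) N :
  is_RInt (fun x => sum_f_R0 (fun n => u n * cos (INR n * x)) N) 0 PI (u 0%nat * PI).
Proof.
  induction N.
  - simpl. apply is_RInt_ext with (fun _ => u 0%nat).
    + intros x _. simpl. rewrite Rmult_0_l, cos_0. symmetry; apply Rmult_1_r.
    + apply is_RInt_eq_l with (scal (PI - 0) (u 0%nat)). apply (@is_RInt_const R_NormedModule).
      unfold scal; simpl; unfold mult; simpl; ring.
  - simpl. apply is_RInt_eq_l with (plus (u 0%nat * PI) (scal (u (S N)) 0)).
    + apply (is_RInt_plus (fun x => sum_f_R0 (fun n => u n * cos (INR n * x)) N)
        (fun x => scal (u (S N)) (cos (INR (S N) * x)))); auto.
      apply (@is_RInt_scal R_NormedModule). apply is_RInt_cos_n; lia.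
    + unfold plus, scal; simpl; unfold mult; simpl. ring.
Qed.

Lemma zero_of_geom z D q : 0 <= q < 1 -> (forall n, Rabs z <= D * q ^ n) -> z = 0.
Proof.
  intros Hq H. destruct (Req_dec z 0) as [|Hz]; auto. exfalso.
  assert (Hz' : 0 < Rabs z) by (apply Rabs_pos_lt; auto).
  assert (Hq1 : Rabs q < 1) by (rewrite Rabs_right; lra).
  pose proof (Rabs_pos D).
  assert (He : 0 < Rabs z / (Rabs D + 1)) by (apply Rdiv_lt_0_compat; lra).
  destruct (pow_lt_1_zero q Hq1 _ He) as [N HN].
  specialize (HN N (le_n _)). specialize (H N).
  assert (0 <= q ^ N) by (apply pow_le; lra).
  rewrite Rabs_right in HN by lra.
  assert (HD : D * q ^ N <= Rabs D * q ^ N) by (apply Rmult_le_compat_r; [lra| apply Rle_abs]).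
  assert ((Rabs D + 1) * q ^ N < Rabs z).
  { apply Rmult_lt_reg_r with (/ (Rabs D + 1)). apply Rinv_0_lt_compat; lra.
    rewrite Rmult_comm, <- Rmult_assoc, Rinv_l by lra. unfold Rdiv in HN. lra. }
  nra.
Qed.

Lemma continuous_multR (f g : R -> R) x :
  continuous f x -> continuous g x -> continuous (fun y => f y * g y) x.
Proof. intros. apply (@continuous_mult R_UniformSpace R_AbsRing f g x); auto. Qed.

Lemma cos_cont n x : continuous (fun y => cos (INR n * y)) x.
Proof. apply (@ex_derive_continuous R_AbsRing R_NormedModule). auto_derive; auto. Qed.

Lemma ex_RInt_continuousR (f : R -> R) a b :
  (forall z, Rmin a b <= z <= Rmax a b -> continuous f z) -> ex_RInt f a b.
Proof. exact (@ex_RInt_continuous R_CompleteNormedModule f a b). Qed.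

Lemma is_RInt_uniqueR (f : R -> R) a b l : is_RInt f a b l -> RInt f a b = l.
Proof. exact (@is_RInt_unique R_CompleteNormedModule f a b l). Qed.

Lemma is_RInt_scalR (f : R -> R) a b k l : is_RInt f a b l -> is_RInt (fun y => k * f y) a b (k * l).
Proof. exact (@is_RInt_scal R_NormedModule f a b k l). Qed.

Lemma is_RInt_plusR (f g : R -> R) a b l1 l2 : is_RInt f a b l1 -> is_RInt g a b l2 ->
  is_RInt (fun y => f y + g y) a b (l1 + l2).
Proof. exact (@is_RInt_plus R_NormedModule f g a b l1 l2). Qed.

Lemma is_RInt_minusR (f g : R -> R) a b l1 l2 : is_RInt f a b l1 -> is_RInt g a b l2 ->
  is_RInt (fun y => f y - g y) a b (l1 - l2).
Proof. exact (@is_RInt_minus R_NormedModule f g a b l1 l2). Qed.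

Lemma is_RInt_extR (f g : R -> R) a b l :
  (forall x, Rmin a b < x < Rmax a b -> f x = g x) -> is_RInt f a b l -> is_RInt g a b l.
Proof. exact (@is_RInt_ext R_NormedModule f g a b l). Qed.
Theorem lemma5p2 (alpha beta b d d2 tau : R)
  (Halpha : 0 < alpha) (Hbeta : 0 < beta) (Hb : 0 < b) (Hd : 0 < d)
  (Hd2 : 0 < d2) (Htau : 0 < tau)
  (s : R) (psi : R -> R)
  (Hpr : principal_eigenpair alpha beta b d d2 tau s psi) :
  let lambda1 := - alpha + beta * b / (d * exp (alpha * tau)) in
  (0 < s <-> 0 < lambda1) /\ (s = 0 <-> lambda1 = 0) /\ (s < 0 <-> lambda1 < 0).
Proof.
  intros lambda1.
  destruct Hpr as (Hd1 & Hc2 & Hpos & HD0 & HDpi & Heq).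
  assert (HPI : 0 < PI) by apply PI_RGT_0.
  assert (Hcont : forall x, 0 <= x <= PI -> continuous psi x).
  { intros x Hx. apply (@ex_derive_continuous R_AbsRing R_NormedModule). apply Hd1; auto. }
  assert (Hcpt : forall x, 0 <= x <= PI -> continuity_pt psi x).
  { intros x Hx. apply continuity_pt_filterlim. apply Hcont; auto. }
  destruct (continuity_ab_maj psi 0 PI (Rlt_le _ _ HPI) Hcpt) as [Mx [HMx HMxr]].
  set (M := psi Mx).
  assert (HM : 0 < M) by (apply Hpos; auto).
  set (clamp := fun y => Rmax 0 (Rmin PI y)).
  assert (Hclamp : forall y, 0 <= clamp y <= PI).
  { intros y; unfold clamp; split. apply Rmax_l. apply Rmax_lub. lra. apply Rmin_l. }
  assert (Hclampid : forall y, 0 <= y <= PI -> clamp y = y).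
  { intros y Hy; unfold clamp. rewrite Rmin_right by lra. rewrite Rmax_right; lra. }
  set (psit := fun y => psi (clamp y)).
  assert (Hpsit : forall y, Rabs (psit y) <= M).
  { intros y; unfold psit. pose proof (Hpos _ (Hclamp y)). rewrite Rabs_right by lra.
    apply HMx; auto. }
  assert (Hpsiteq : forall y, 0 <= y <= PI -> psit y = psi y).
  { intros y Hy; unfold psit; rewrite Hclampid; auto. }
  assert (Hopen : forall (f : R -> R) y, Rmin 0 PI < y < Rmax 0 PI -> f (psit y) = f (psi y)).
  { intros f y Hy. rewrite Rmin_left, Rmax_right in Hy by lra. rewrite Hpsiteq; auto; lra. }
  assert (Hexc : forall n, ex_RInt (fun y => cos (INR n * y) * psit y) 0 PI).
  { intros n. apply ex_RInt_ext with (fun y => cos (INR n * y) * psi y).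
    - intros y Hy. symmetry. apply (Hopen (fun z => cos (INR n * y) * z)); auto.
    - apply ex_RInt_continuousR. intros z Hz. rewrite Rmin_left, Rmax_right in Hz by lra.
      apply continuous_multR; [apply cos_cont | apply Hcont; auto]. }
  set (c := fun n => RInt (fun y => cos (INR n * y) * psit y) 0 PI).
  set (A := fun n x => green_coef n / PI * exp (- (d2 * (INR n) ^ 2 + alpha) * tau) * cos (INR n * x)).
  set (q := exp (- d2 * tau)).
  set (K := 2 / PI * exp (- alpha * tau)).
  assert (Hq : 0 <= q < 1).
  { unfold q; split. apply Rlt_le, exp_pos. rewrite <- exp_0. apply exp_increasing. nra. }
  assert (HK : 0 <= K).
  { unfold K. apply Rmult_le_pos. unfold Rdiv; apply Rmult_le_pos; [lra| apply Rlt_le, Rinv_0_lt_compat; lra].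
    apply Rlt_le, exp_pos. }
  set (C1 := K * q * M / (1 - q)).
  assert (HC1 : 0 <= C1).
  { unfold C1. unfold Rdiv. apply Rmult_le_pos. apply Rmult_le_pos. apply Rmult_le_pos; lra. lra.
    apply Rlt_le, Rinv_0_lt_compat; lra. }
  set (phit := fun x => RInt (fun y => Gamma d2 alpha x y tau * psit y) 0 PI).
  set (G := fun N x => sum_f_R0 (fun n => A n x * c n) N).
  assert (Hterm : forall n x, is_RInt (fun y => gterm d2 alpha x y tau n * psit y) 0 PI (A n x * c n)).
  { intros n x. apply is_RInt_extR with (fun y => A n x * (cos (INR n * y) * psit y)).
    - intros y _. unfold A, gterm. ring.
    - apply is_RInt_scalR. apply RInt_correctR. apply Hexc. }
  assert (Htail : forall x y N, Rabs (sum_f_R0 (fun n => gterm d2 alpha x y tau n * psit y) N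
      - Gamma d2 alpha x y tau * psit y) <= C1 * q ^ N).
  { intros x y N.
    destruct (series_tail (gterm d2 alpha x y tau) K q HK Hq) as [_ HT].
    { intros n. apply gterm_bound; auto. }
    specialize (HT N).
    change (Gamma d2 alpha x y tau) with (Series (gterm d2 alpha x y tau)).
    replace (sum_f_R0 (fun n => gterm d2 alpha x y tau n * psit y) N)
      with (psit y * sum_f_R0 (gterm d2 alpha x y tau) N) by (rewrite scal_sum; reflexivity).
    replace (psit y * sum_f_R0 (gterm d2 alpha x y tau) N - Series (gterm d2 alpha x y tau) * psit y)
      with (- (psit y * (Series (gterm d2 alpha x y tau) - sum_f_R0 (gterm d2 alpha x y tau) N))) by ring.
    rewrite Rabs_Ropp, Rabs_mult.
    replace (C1 * q ^ N) with (M * (K * q ^ S N / (1 - q))) by (unfold C1; simpl; field; lra).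
    apply Rmult_le_compat; auto using Rabs_pos. }
  assert (Hy : forall x, ex_RInt (fun y => Gamma d2 alpha x y tau * psit y) 0 PI /\
      forall N, Rabs (G N x - phit x) <= (PI - 0) * (C1 * q ^ N)).
  { intros x.
    assert (Hf : forall N, is_RInt (fun y => sum_f_R0 (fun n => gterm d2 alpha x y tau n * psit y) N) 0 PI (G N x)).
    { intros N. unfold G.
      apply is_RInt_eq_l with (sum_f_R0 (fun n => RInt (fun y => gterm d2 alpha x y tau n * psit y) 0 PI) N).
      - apply is_RInt_sum. intros n. eexists; apply Hterm.
      - apply sum_eq. intros n _. apply is_RInt_uniqueR, Hterm. }
    destruct (unif_RInt (fun N y => sum_f_R0 (fun n => gterm d2 alpha x y tau n * psit y) N)
      (fun y => Gamma d2 alpha x y tau * psit y) 0 PI C1 q (Rlt_le _ _ HPI) HC1 Hq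
      (fun N => ex_intro _ _ (Hf N)) (fun N y => Htail x y N)) as [Hex Hb'].
    split; auto. intros N. specialize (Hb' N). rewrite (is_RInt_uniqueR _ _ _ _ (Hf N)) in Hb'.
      exact Hb'. }
  set (u := fun n => green_coef n / PI * exp (- (d2 * (INR n) ^ 2 + alpha) * tau) * c n).
  assert (HG : forall N, is_RInt (G N) 0 PI (u 0%nat * PI)).
  { intros N. apply is_RInt_extR with (fun x => sum_f_R0 (fun n => u n * cos (INR n * x)) N).
    - intros x _. unfold G. apply sum_eq. intros n _. unfold u, A. ring.
    - apply is_RInt_cos_sum. }
  assert (HPC : 0 <= PI * C1) by (apply Rmult_le_pos; lra).
  destruct (unif_RInt G phit 0 PI (PI * C1) q (Rlt_le _ _ HPI) HPC Hq
      (fun N => ex_intro _ _ (HG N))) as [Hexphi Hbphi].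
  { intros N x. destruct (Hy x) as [_ H]. specialize (H N).
    replace (PI * C1 * q ^ N) with ((PI - 0) * (C1 * q ^ N)) by ring. exact H. }
  assert (HRphi : RInt phit 0 PI = u 0%nat * PI).
  { assert (H0 : u 0%nat * PI - RInt phit 0 PI = 0).
    { apply (zero_of_geom _ (PI * (PI * C1)) q Hq). intros N. specialize (Hbphi N).
      rewrite (is_RInt_uniqueR _ _ _ _ (HG N)) in Hbphi.
      replace (PI * (PI * C1) * q ^ N) with ((PI - 0) * (PI * C1 * q ^ N)) by ring. exact Hbphi. }
    lra. }
  assert (Hexpsi : ex_RInt psi 0 PI).
  { apply ex_RInt_continuousR. intros z Hz. rewrite Rmin_left, Rmax_right in Hz by lra. apply Hcont; auto. }
  set (I := RInt psi 0 PI).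
  assert (HI : 0 < I).
  { apply RInt_gt_0; auto. intros x Hx; apply Hpos; lra. }
  assert (Hc0 : c 0%nat = I).
  { unfold c, I. apply RInt_ext. intros y Hy0. rewrite Rmin_left, Rmax_right in Hy0 by lra.
    rewrite Hpsiteq by lra. simpl. rewrite Rmult_0_l, cos_0. ring. }
  assert (Hu0 : u 0%nat * PI = exp (- alpha * tau) * I).
  { unfold u. rewrite Hc0. unfold green_coef. simpl. replace (- (d2 * (0 * (0 * 1)) + alpha) * tau) with (- alpha * tau) by ring.
    field. lra. }
  assert (HPhi : is_RInt (fun x => RInt (fun y => Gamma d2 alpha x y tau * psi y) 0 PI) 0 PI (exp (- alpha * tau) * I)).
  { apply is_RInt_extR with phit.
    - intros x _. unfold phit. apply RInt_ext. intros y Hy0. apply (Hopen (fun z => Gamma d2 alpha x y tau * z)); auto.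
    - rewrite <- Hu0, <- HRphi. apply RInt_correctR; auto. }
  assert (H2 : is_RInt (Derive_n psi 2) 0 PI 0).
  { apply is_RInt_eq_l with (minus (Derive psi PI) (Derive psi 0)).
    - apply (@is_RInt_derive R_CompleteNormedModule (Derive psi) (Derive_n psi 2)).
      + intros x Hx. rewrite Rmin_left, Rmax_right in Hx by lra.
        apply (Derive_correct (Derive psi)). apply Hd1; auto.
      + intros x Hx. rewrite Rmin_left, Rmax_right in Hx by lra. apply Hc2; auto.
    - rewrite HD0, HDpi. unfold minus, plus, opp; simpl. ring. }
  set (E := exp (- s * tau)).
  set (Kc := b * beta / d).
  assert (Hall : is_RInt (fun x => d2 * Derive_n psi 2 x - alpha * psi x
       + E * Kc * RInt (fun y => Gamma d2 alpha x y tau * psi y) 0 PI) 0 PI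
       (d2 * 0 - alpha * I + E * Kc * (exp (- alpha * tau) * I))).
  { apply is_RInt_plusR. apply is_RInt_minusR. apply is_RInt_scalR; auto.
    apply is_RInt_scalR; apply RInt_correctR; auto. apply is_RInt_scalR; auto. }
  assert (Hall2 : is_RInt (fun x => s * psi x) 0 PI (d2 * 0 - alpha * I + E * Kc * (exp (- alpha * tau) * I))).
  { apply is_RInt_extR with (2 := Hall). intros x Hx. rewrite Rmin_left, Rmax_right in Hx by lra.
    symmetry. apply Heq; auto. }
  assert (Hs1 : is_RInt (fun x => s * psi x) 0 PI (s * I)).
  { apply is_RInt_scalR; apply RInt_correctR; auto. }
  apply is_RInt_uniqueR in Hall2. apply is_RInt_uniqueR in Hs1.
  rewrite Hs1 in Hall2.
  assert (Hs : s = - alpha + E * (Kc * exp (- alpha * tau))).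
  { apply Rmult_eq_reg_r with I; [|lra]. lra. }
  assert (HL : beta * b / (d * exp (alpha * tau)) = Kc * exp (- alpha * tau)).
  { unfold Kc. replace (- alpha * tau) with (- (alpha * tau)) by ring. rewrite exp_Ropp.
    field. split; [apply Rgt_not_eq, exp_pos | lra]. }
  assert (HLpos : 0 < Kc * exp (- alpha * tau)).
  { apply Rmult_lt_0_compat. unfold Kc. unfold Rdiv. apply Rmult_lt_0_compat; [nra | apply Rinv_0_lt_compat; lra]. apply exp_pos. }
  unfold lambda1. rewrite HL. set (L := Kc * exp (- alpha * tau)) in *.
  assert (Hpos1 : 0 < s -> 0 < - alpha + L).
  { intros Hs0. assert (E < 1). { unfold E. rewrite <- exp_0. apply exp_increasing. nra. } nra. }
  assert (Hneg1 : s < 0 -> - alpha + L < 0).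
  { intros Hs0. assert (1 < E). { unfold E. rewrite <- exp_0. apply exp_increasing. nra. } nra. }
  assert (Hz1 : s = 0 -> - alpha + L = 0).
  { intros Hs0. assert (E = 1). { unfold E. rewrite Hs0. replace (- 0 * tau) with 0 by ring. apply exp_0. } nra. }
  destruct (Rtotal_order s 0) as [Hlt|[Heq0|Hgt]].
  - specialize (Hneg1 Hlt). repeat split; intros; lra.
  - specialize (Hz1 Heq0). repeat split; intros; lra.
  - specialize (Hpos1 Hgt). repeat split; intros; lra.
Qed.
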